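(* Let $M\in SL(N,\mathbb Z)$ be a matrix of type $\mathcal J$ with characteristic polynomial $C=B_0B_1\cdots B_k$ as in the definition of type $\mathcal J$. Then any primary Dirichlet family $\mathcal D$ for $M$ is special, i.e. the subgroup of $SL(N,\mathbb Z)$ generated by the matrices $D(M^\top)$, $D\in\mathcal D$, contains at least one matrix without eigenvalue $1$.
   Context: An integer polynomial $C$ is of type $\mathcal J$ if $C=B_0B_1\cdots B_k$ with $k\ge1$, $B_i\in\mathbb Z[t]$: $B_0$ has no real roots; each $B_i$ ($i\ge1$) is irreducible with at least one real root and at least one non-real root; for $i\ne j$, $(B_i)+(B_j)=\mathbb Z[t]$. $M$ is of type $\mathcal J$ if its characteristic polynomial is. Let $\alpha_1,\dots,\alpha_s$ be the real eigenvalues of $M$, and $\alpha_{j,1},\dots,\alpha_{j,s_j}$ the real roots of $B_j$. A Dirichlet family for $M$ is a family of $s$ polynomials $D_1,\dots,D_s\in\mathbb Z[t]$ with $D_i(M)\in SL(N,\mathbb Z)$, $D_i(\alpha_j)>0$ for all $i,j$, and the vectors $(\log D_i(\alpha_1),\dots,\log D_i(\alpha_s))$ forming a basis of $\mathbb R^s$. It is primary (w.r.t. the factorization) if it is indexed as $(D_{j,i})_{1\le j\le k,1\le i\le s_j}$ and there are $P_{j,i}\in\mathbb Z[t]$, invertible in $\mathbb Z[t]/(B_j)$, with $P_{j,i}(\alpha_{j,l})>0$ for all $i,l$ and the vectors $(\log P_{j,i}(\alpha_{j,1}),\dots,\log P_{j,i}(\alpha_{j,s_j}))$, $1\le i\le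 s_j$, a basis of $\mathbb R^{s_j}$, such that $D_{j,i}\equiv t\bmod B_0$, $D_{j,i}\equiv P_{j,i}\bmod B_j$, and $D_{j,i}\equiv1\bmod B_\mu$ for $\mu\notin\{0,j\}$. *)

(* Defs.v *)
From HB Require Import structures.
From mathcomp Require Import all_boot all_order all_algebra.
From mathcomp Require Import all_classical all_reals exp.
From mathcomp Require Import complex.

Set Implicit Arguments.
Unset Strict Implicit.
Unset Printing Implicit Defensive.

Import Order.TTheory GRing.Theory Num.Theory.
Local Open Scope ring_scope.

Definition polyZ (T : nzRingType) (p : {poly int}) : {poly T} :=
  map_poly (fun z : int => z%:~R) p.

Definition irreducible_Zt (B : {poly int}) : Prop :=
  B != 0 /\ B \isn't a GRing.unit /\
  (forall p q : {poly int}, B = p * q -> p \is a GRing.unit \/ q \is a GRing.unit).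

Definition comaximal_Zt (B1 B2 : {poly int}) : Prop :=
  exists u v : {poly int}, u * B1 + v * B2 = 1.

Definition congr_Zt (B p q : {poly int}) : Prop :=
  exists r : {poly int}, p - q = r * B.

Definition unit_mod_Zt (B p : {poly int}) : Prop :=
  exists u : {poly int}, congr_Zt B (u * p) 1.

Inductive gen_subgroup (n : nat) (S : 'M[int]_n -> Prop) : 'M[int]_n -> Prop :=
| gen_base A : S A -> gen_subgroup S A
| gen_one : gen_subgroup S 1%:M
| gen_mul A B : gen_subgroup S A -> gen_subgroup S B -> gen_subgroup S (A *m B)
| gen_inv A : gen_subgroup S A -> gen_subgroup S (invmx A).

Definition has_eigenvalue_one (R : realType) (n : nat) (A : 'M[int]_n) : bool :=
  eigenvalue (map_mx (fun z : int => z%:~R : R[i]) A) 1.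

Definition enum_real_roots (R : realType) (p : {poly int}) (s : nat)
  (alpha : 'I_s -> R) : Prop :=
  injective alpha /\ (forall x : R, root (polyZ R p) x <-> exists l, x = alpha l).

Definition enum_real_eigenvalues (R : realType) (n : nat) (M : 'M[int]_n)
  (s : nat) (alpha : 'I_s -> R) : Prop :=
  injective alpha /\
  (forall x : R, eigenvalue (map_mx (fun z : int => z%:~R : R) M) x <-> exists l, x = alpha l).

(* Type J factorization C = B0 * prod_{j<k} B j (B j stands for B_{j+1}). *)
Definition type_J_factorization (R : realType) (C B0 : {poly int}) (k : nat)
  (B : 'I_k -> {poly int}) : Prop :=
  [/\ (1 <= k)%N,
      C = B0 * \prod_(j < k) B j,
      (forall x : R, ~~ root (polyZ R B0) x),
      (forall j, [/\ irreducible_Zt (B j),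
                    (exists x : R, root (polyZ R (B j)) x) &
                    (exists z : R[i], root (polyZ R[i] (B j)) z /\ complex.Im z != 0)]) &
      (forall j, comaximal_Zt B0 (B j)) /\
      (forall i j, i != j -> comaximal_Zt (B i) (B j))].

Definition dirichlet_family (R : realType) (n : nat) (M : 'M[int]_n.+1)
  (s : nat) (alpha : 'I_s -> R) (I : finType) (D : I -> {poly int}) : Prop :=
  [/\ (forall i, \det (horner_mx M (D i)) = 1),
      (forall i l, 0 < (polyZ R (D i)).[alpha l]) &
      basis_of fullv [seq \row_(l < s) ln ((polyZ R (D i)).[alpha l]) | i : I]].

Definition primary_dirichlet_family (R : realType) (n : nat) (M : 'M[int]_n.+1)
  (s : nat) (alpha : 'I_s -> R)
  (B0 : {poly int}) (k : nat) (B : 'I_k -> {poly int})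
  (sj : 'I_k -> nat) (alphaj : forall j, 'I_(sj j) -> R)
  (D : {j : 'I_k & 'I_(sj j)} -> {poly int}) : Prop :=
  dirichlet_family M alpha D /\
  exists P : {j : 'I_k & 'I_(sj j)} -> {poly int},
    forall j : 'I_k,
      [/\ (forall i : 'I_(sj j), unit_mod_Zt (B j) (P (Tagged _ i))),
          (forall (i l : 'I_(sj j)), 0 < (polyZ R (P (Tagged _ i))).[alphaj j l]),
          basis_of fullv [seq \row_(l < sj j) ln ((polyZ R (P (Tagged _ i))).[alphaj j l])
                         | i : 'I_(sj j)] &
          (forall i : 'I_(sj j),
             [/\ congr_Zt B0 (D (Tagged _ i)) 'X,
                 congr_Zt (B j) (D (Tagged _ i)) (P (Tagged _ i)) &
                 forall mu : 'I_k, mu != j -> congr_Zt (B mu) (D (Tagged _ i)) 1])].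

Definition special (R : realType) (n : nat) (M : 'M[int]_n.+1) (I : finType)
  (D : I -> {poly int}) : Prop :=
  exists2 A, gen_subgroup (fun X => exists i, X = horner_mx M^T (D i)) A
           & ~~ has_eigenvalue_one R A.

(* Main.v *)
Require Import Defs.
From HB Require Import structures.
From mathcomp Require Import all_boot all_order all_algebra.
From mathcomp Require Import all_classical all_reals exp.
From mathcomp Require Import complex.
Set Implicit Arguments. Unset Strict Implicit. Unset Printing Implicit Defensive.
Import Order.TTheory GRing.Theory Num.Theory.
Local Open Scope ring_scope.
Local Notation pZtoQ := (map_poly (intr : int -> rat)).

Lemma irr_int (R : realType) (B : {poly int}) (x0 : R) :
  irreducible_Zt B -> root (polyZ R B) x0 -> irreducible_poly B.
Proof.
move=> [B0 [Bnu Birr]] rx.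
split.
  rewrite ltnNge; apply/negP => sB.
  move: rx; rewrite (size1_polyC sB) /polyZ map_polyC /= rootC intr_eq0 => /eqP c0.
  by move: B0; rewrite (size1_polyC sB) c0 eqxx.
move=> q sq; rewrite -dvdp_rat_int => /dvdpP_rat_int [p1 [a a0 qE] [r Be]].
have [p1u|ru] := Birr _ _ Be.
  move: sq; rewrite -(size_rat_int_poly q) qE size_scale // size_rat_int_poly.
  by move: p1u; rewrite poly_unitE => /andP[/eqP -> _].
move: ru; rewrite poly_unitE => /andP[/eqP sr ru].
rewrite /eqp -!dvdp_rat_int.
have e1 : pZtoQ q %= pZtoQ B.
  rewrite qE Be rmorphM /= (size1_polyC (eq_leq sr)) map_polyC /=.
  apply: eqp_trans (eqp_scale _ a0) _.
  rewrite mulrC mul_polyC eqp_sym; apply/eqp_scale.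
  by rewrite intr_eq0; apply: contraTneq ru => ->.
by move: e1; rewrite /eqp.
Qed.

Lemma polyZ_rat (T : numFieldType) (p : {poly int}) :
  polyZ T p = map_poly (ratr : rat -> T) (pZtoQ p).
Proof. by rewrite /polyZ -map_poly_comp; apply: eq_map_poly => z /=; rewrite ratr_int. Qed.

Lemma transfer (R : realType) (B F : {poly int}) (x0 : R) (lam : R[i]) :
  irreducible_Zt B -> root (polyZ R B) x0 -> root (polyZ R[i] B) lam ->
  root (polyZ R[i] F) lam -> polyZ R B %| polyZ R F.
Proof.
move=> hB rx rB rF.
have irr := (irreducible_rat_int B).2 (irr_int hB rx).
set g := gcdp (pZtoQ B) (pZtoQ F).
have rg : root (map_poly (ratr : rat -> R[i]) g) lam.
  by rewrite gcdp_map -!polyZ_rat root_gcd rB rF.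
have sg : size g != 1.
  apply/negP => /size_poly1P [c c0 gE].
  by move: rg; rewrite gE map_polyC rootC fmorph_eq0 (negPf c0).
have e : g %= pZtoQ B := irr.2 _ sg (dvdp_gcdl _ _).
have d : pZtoQ B %| pZtoQ F by rewrite -(eqp_dvdl _ e) dvdp_gcdr.
by rewrite !polyZ_rat dvdp_map.
Qed.

Lemma horner_mx_tr (R : comNzRingType) n (M : 'M[R]_n.+1) p :
  horner_mx M^T p = (horner_mx M p)^T.
Proof.
elim/poly_ind: p => [|p c IH]; first by rewrite !rmorph0 trmx0.
rewrite !rmorphD !rmorphM /= !horner_mx_X !horner_mx_C IH.
rewrite linearD /= tr_scalar_mx; congr (_ + _).
have cm : horner_mx M p * M = M * horner_mx M p.
  by have := comm_horner_mx2 M p 'X; rewrite horner_mx_X.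
by rewrite cm -!mulmxE trmx_mul.
Qed.

Lemma char_poly_tr (R : comNzRingType) n (M : 'M[R]_n) :
  char_poly M^T = char_poly M.
Proof.
rewrite /char_poly -det_tr; congr (\det _).
rewrite /char_poly_mx linearB /= tr_scalar_mx.
by rewrite -map_trmx trmxK.
Qed.
From Stdlib Require Import Classical.
Import Pdiv.

Lemma singular_root (F : closedFieldType) n (N : 'M[F]_n.+1) (Q : {poly F})
  (v : 'rV_n.+1) :
  v != 0 -> v *m horner_mx N Q = 0 -> exists2 lam, root (char_poly N) lam & root Q lam.
Proof.
move=> v0 vQ.
case: (classic (exists2 lam, root (char_poly N) lam & root Q lam)) => // H.
have H' : forall lam, root (char_poly N) lam -> Q.[lam] != 0.
  by move=> lam r; apply/negP => q; apply: H; exists lam.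
have /Bezout_coprimepP [[u1 u2] /=] := ClosedField.root_coprimep H'.
rewrite -size_poly_eq1 => /size_poly1P [c c0 uE].
have := congr1 (horner_mx N) uE.
rewrite rmorphD !rmorphM /= Cayley_Hamilton mulr0 add0r horner_mx_C => e.
have : v *m (horner_mx N Q * horner_mx N u2) = 0 by rewrite -mulmxE mulmxA vQ mul0mx.
rewrite -(comm_horner_mx2 N u2 Q) e mul_mx_scalar => /eqP.
by rewrite scaler_eq0 (negPf c0) (negPf v0).
Qed.

Lemma congr_eval (T : comNzRingType) (B p q : {poly int}) (lam : T) :
  congr_Zt B p q -> root (polyZ T B) lam -> (polyZ T p).[lam] = (polyZ T q).[lam].
Proof.
move=> [r e] rB; have := congr1 (fun p => (polyZ T p).[lam]) e.
rewrite /polyZ /= rmorphB rmorphM /= hornerD hornerN hornerM (rootP rB) mulr0.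
by move/eqP; rewrite subr_eq0 => /eqP.
Qed.

Lemma root_polyZ_int (T : numDomainType) (p : {poly int}) (z : int) :
  root (polyZ T p) (z%:~R) = root p z.
Proof. by rewrite /root /polyZ (horner_map (intr : {rmorphism int -> T})) intr_eq0. Qed.

Lemma gen_exp n S (A : 'M[int]_n) m : gen_subgroup S A -> gen_subgroup S (A ^+ m).
Proof.
move=> hA; elim: m => [|m IH]; first exact: gen_one.
by rewrite exprS; apply: gen_mul.
Qed.

Lemma det_exp (T : comNzRingType) n (A : 'M[T]_n.+1) m : \det (A ^+ m) = \det A ^+ m.
Proof.
elim: m => [|m IH]; first by rewrite !expr0 det1.
by rewrite !exprS -mulmxE det_mulmx IH.
Qed.

Unset Implicit Arguments.

Theorem proposition6p12 (R : realType) (n : nat) (M : 'M[int]_n.+1)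
  (hM : \det M = 1)
  (B0 : {poly int}) (k : nat) (B : 'I_k -> {poly int})
  (hJ : type_J_factorization R (char_poly M) B0 B)
  (s : nat) (alpha : 'I_s -> R) (halpha : enum_real_eigenvalues M alpha)
  (sj : 'I_k -> nat) (alphaj : forall j, 'I_(sj j) -> R)
  (halphaj : forall j, enum_real_roots (B j) (alphaj j))
  (D : {j : 'I_k & 'I_(sj j)} -> {poly int})
  (hD : primary_dirichlet_family M alpha B0 B alphaj D) :
  special R M D.
Proof.
case: hJ => hk hC hB0 hBj _.
case: hD => [[hdet _ _] [P hP]].
have pos : forall j, (0 < sj j)%N.
  move=> j; have [_ [x rx] _] := hBj j.
  have [_ /(_ x) [/(_ rx) [l _] _]] := halphaj j.
  exact: (leq_ltn_trans (leq0n _) (ltn_ord l)).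
pose i0 j := Ordinal (pos j).
pose j0 : 'I_k := Ordinal hk.
pose d j := D (Tagged (fun j => 'I_(sj j)) (i0 j)).
pose H j := horner_mx M^T (d j).
pose X := \prod_(j | j != j0) H j.
pose Y := H j0 ^+ k.
have detH : \det (H j0) = 1 by rewrite /H horner_mx_tr det_tr hdet.
have Yu : Y \in unitmx by rewrite unitmxE /Y det_exp detH expr1n unitr1.
exists (X * invmx Y).
  apply: gen_mul; last by apply/gen_inv/gen_exp/gen_base; exists (Tagged (fun j => 'I_(sj j)) (i0 j0)).
  apply: (big_ind (gen_subgroup _)); [exact: gen_one | move=> ? ?; exact: gen_mul|].
  by move=> j _; apply: gen_base; exists (Tagged (fun j => 'I_(sj j)) (i0 j)).
rewrite /has_eigenvalue_one; apply/negP => /eigenvalueP [v vA v0].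
have XY : X = X * invmx Y * Y by rewrite -!mulmxE mulmxKV.
pose Q := \prod_(j | j != j0) d j - d j0 ^+ k.
have hQ : X - Y = horner_mx M^T Q by rewrite rmorphB rmorph_prod rmorphXn.
have vQ : v *m horner_mx (map_mx (intr : int -> R[i]) M^T) (map_poly intr Q) = 0.
  rewrite -map_horner_mx -hQ map_mxB mulmxBr {1}XY -mulmxE map_mxM mulmxA.
  rewrite vA scale1r.
  exact: subrr.
have [lam rch rQ] := singular_root v0 vQ.
move: rch; rewrite -map_char_poly char_poly_tr hC.
rewrite rmorphM rmorph_prod /root hornerM mulf_eq0 horner_prod.
move=> /orP [rB0 | /prodf_eq0 [j1 _ rBj]].
  move: rQ; rewrite /root rmorphB rmorph_prod rmorphXn /= hornerD hornerN horner_exp.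
  rewrite horner_prod subr_eq0 => /eqP rQ.
  have dl : forall j, (map_poly intr (d j)).[lam] = lam.
    move=> j; have [_ _ _ /(_ (i0 j)) [c0 _ _]] := hP j.
    by have := congr_eval c0 rB0; rewrite /polyZ map_polyX hornerX.
  rewrite (eq_bigr (fun _ => lam)) in rQ; last by move=> j _; exact: dl.
  rewrite dl in rQ.
  have e : \prod_(j < k) lam = lam * \prod_(j < k | j != j0) lam := bigD1 j0 isT.
  rewrite prodr_const card_ord rQ in e.
  have [l0|l1] : lam = 0 \/ lam = 1.
    have : lam ^+ k * (lam - 1) = 0 by rewrite mulrBr mulr1 mulrC -e subrr.
    move/eqP; rewrite mulf_eq0 expf_eq0 subr_eq0 => /orP [/andP [_ /eqP ->]| /eqP ->].
      by left.
    by right.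
    have h1 : root (polyZ R[i] B0) ((0:int)%:~R) by rewrite mulr0z -l0.
    by rewrite root_polyZ_int -(root_polyZ_int R) in h1; move: (hB0 (0:int)%:~R); rewrite h1.
  have h1 : root (polyZ R[i] B0) ((1:int)%:~R) by rewrite mulr1z -l1.
  by rewrite root_polyZ_int -(root_polyZ_int R) in h1; move: (hB0 (1:int)%:~R); rewrite h1.
have rBj' : root (map_poly intr (B j1)) lam by [].
pose Pj := P (Tagged (fun j => 'I_(sj j)) (i0 j1)).
have [hu hpos hbas hc] := hP j1.
have d1 : (map_poly intr (d j1)).[lam] = (map_poly intr Pj).[lam].
  by have [_ c1 _] := hc (i0 j1); exact: congr_eval c1 rBj'.
have dother : forall j, j != j1 -> (map_poly intr (d j)).[lam] = 1.
  move=> j nj; have [_ _ _ /(_ (i0 j)) [_ _ c2]] := hP j.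
  have nj' : j1 != j by rewrite eq_sym.
  have := congr_eval (c2 j1 nj') rBj'.
  by rewrite /polyZ rmorph1 hornerC.
move: rQ; rewrite /root rmorphB rmorph_prod rmorphXn /= hornerD hornerN horner_exp.
rewrite horner_prod subr_eq0 => /eqP rQ.
have [m m0 rF] : exists2 m, (0 < m)%N & root (map_poly intr (Pj ^+ m - 1)) lam.
  case: (eqVneq j1 j0) => [e|ne].
    exists k => //.
    rewrite big1 in rQ; last by move=> j nj; apply: dother; rewrite e.
    rewrite -e d1 in rQ.
    by rewrite /root rmorphB rmorphXn rmorph1 /= hornerD hornerN horner_exp hornerC -rQ subrr.
  exists 1%N => //.
  rewrite (bigD1 j1) /= in rQ; last exact: ne.
  rewrite big1 in rQ; last by move=> j /andP[_ nj]; exact: dother.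
  rewrite (dother j0) ?expr1n in rQ; last by rewrite eq_sym.
  by rewrite /root rmorphB rmorph1 expr1 /= hornerD hornerN hornerC -d1 -[X in _ - X]rQ mulr1 subrr.
have [hirr [x0 rx0] _] := hBj j1.
have dv := transfer hirr rx0 rBj' rF.
have one : forall l, (polyZ R Pj).[alphaj j1 l] = 1.
  move=> l; have rl : root (polyZ R (B j1)) (alphaj j1 l).
    by apply/((halphaj j1).2 _).2; exists l.
  have hp := hpos (i0 j1) l.
  have := root_dvdp dv rl.
  rewrite /root /polyZ rmorphB rmorphXn rmorph1 /= hornerD hornerN horner_exp hornerC.
  by rewrite subr_eq0 pexpr_eq1 // ?ltW // => /eqP.
have z : \row_(l < sj j1) ln ((polyZ R Pj).[alphaj j1 l]) = 0.
  by apply/rowP => l; rewrite !mxE one ln1.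
have mem : 0 \in [seq \row_(l < sj j1) ln ((polyZ R (P (Tagged _ i))).[alphaj j1 l])
                 | i : 'I_(sj j1)].
  by rewrite -z; apply: (map_f (fun i : 'I_(sj j1) => \row_(l < sj j1) ln ((polyZ R (P (Tagged _ i))).[alphaj j1 l]))); rewrite mem_enum.
by have := free_not0 (basis_free hbas) mem; rewrite eqxx.
Qed.
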